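(* Let $G$ be a connected graph of girth $s$ and let $k\ge 2$. Suppose $G$ has $k$ level-disjoint partitions $\mathcal{S}^1,\dots,\mathcal{S}^k$ rooted in a vertex $v$ of optimal height, i.e. $\max_i h(\mathcal{S}^i)=\mathrm{ecc}(v)+k-1$ if $G$ is non-bipartite and $\max_i h(\mathcal{S}^i)=\mathrm{ecc}(v)+2k-2$ if $G$ is bipartite. Then $\mathrm{ecc}(v)\ge s-2$ if $G$ is non-bipartite, and $\mathrm{ecc}(v)\ge s-3$ if $G$ is bipartite.
   Context: For $S\subseteq V(G)$, $N(S)$ is the set of vertices adjacent to some vertex of $S$. A level partition of $G$ is a tuple $\mathcal{S}=(S_0,\dots,S_h)$ of pairwise disjoint sets with union $V(G)$ such that $S_i\subseteq N(S_{i-1})$ for $1\le i\le h$; $h(\mathcal{S})=h$ is its height; it is rooted in $v$ if $S_0=\{v\}$. Level partitions are level-disjoint if for every two of them $\mathcal{S},\mathcal{T}$, $S_i\cap T_i=\emptyset$ for every $1\le i\le\min(h(\mathcal{S}),h(\mathcal{T}))$. The girth is the length of a shortest cycle; $\mathrm{ecc}(v)=\max_{u} d(u,v)$. *)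

(* Defs.v *)
From mathcomp Require Import all_boot.
Set Implicit Arguments. Unset Strict Implicit. Unset Printing Implicit Defensive.

Section Graphs.
Variable T : finType.
Variable e : rel T.

Definition simple_graph : Prop := symmetric e /\ irreflexive e.

Definition connected : Prop := forall u w : T, connect e u w.

Definition bipartite : Prop := exists f : T -> bool, forall x y, e x y -> f x != f y.

Definition is_cycle_of_length (c : seq T) (l : nat) : Prop :=
  [/\ cycle e c, uniq c, size c = l & 3 <= l].

Definition girth (s : nat) : Prop :=
  (exists c, is_cycle_of_length c s) /\
  (forall c l, is_cycle_of_length c l -> s <= l).

Definition walk_len (u w : T) (n : nat) : Prop :=
  exists p : seq T, [/\ path e u p, last u p = w & size p = n].

Definition is_dist (u w : T) (d : nat) : Prop :=
  walk_len u w d /\ forall n, walk_len u w n -> d <= n.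

Definition is_ecc (v : T) (m : nat) : Prop :=
  (exists u, is_dist v u m) /\ forall u d, is_dist v u d -> d <= m.

Definition nbhd (S : {set T}) : {set T} := [set y | [exists x in S, e x y]].

Definition height (P : seq {set T}) : nat := (size P).-1.

Definition level_partition (P : seq {set T}) : Prop :=
  [/\ 0 < size P,
      (forall i j, i < size P -> j < size P -> i != j ->
         [disjoint nth set0 P i & nth set0 P j]),
      (forall x : T, exists2 i, i < size P & x \in nth set0 P i) &
      (forall i, 1 <= i <= height P -> nth set0 P i \subset nbhd (nth set0 P i.-1))].

Definition rooted_in (P : seq {set T}) (v : T) : Prop := nth set0 P 0 = [set v].

Definition level_disjoint (k : nat) (Ps : 'I_k -> seq {set T}) : Prop :=
  forall a b : 'I_k, a != b ->
    forall i, 1 <= i <= minn (height (Ps a)) (height (Ps b)) ->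
      nth set0 (Ps a) i :&: nth set0 (Ps b) i = set0.

Definition max_height (k : nat) (Ps : 'I_k -> seq {set T}) : nat :=
  \max_(a < k) height (Ps a).

End Graphs.

(* Main.v *)
Require Import Defs.
From mathcomp Require Import all_boot.
From mathcomp Require Import zify.

Lemma count_bound k (L : 'I_k -> nat) (A : seq nat) :
  injective L -> (forall a, L a \in A) -> k <= size A.
Proof.
move=> Hi HA.
have Hu : uniq (map L (enum 'I_k)) by rewrite map_inj_uniq // enum_uniq.
have := uniq_leq_size Hu. rewrite size_map size_enum_ord; apply => x /mapP [a _ ->].
exact: HA.
Qed.

Lemma levels_path (T : finType) (e : rel T) (P : seq {set T}) (v : T) :
  level_partition e P -> rooted_in P v ->
  forall l x, l < size P -> x \in nth set0 P l ->
  exists p, [/\ path e v p, last v p = x, size p = l &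
     forall i, i <= l -> nth v (v :: p) i \in nth set0 P i].
Proof.
move=> [_ _ _ Hsub] Hr; rewrite /rooted_in in Hr.
elim=> [|l IH] x Hl Hx.
  exists [::]; rewrite Hr in Hx; move/set1P: Hx => ->; split=> //.
  by move=> i; rewrite leqn0 => /eqP ->; rewrite /= Hr set11.
have : x \in nbhd e (nth set0 P l).
  apply: (subsetP (Hsub l.+1 _)) => //; rewrite /height; apply/andP; split=> //; lia.
rewrite inE => /existsP [y /andP [Hy Hyx]].
have [p [Hp Hlast Hsz Hlev]] := IH y (ltnW Hl) Hy.
exists (rcons p x); split.
- by rewrite rcons_path Hp Hlast Hyx.
- by rewrite last_rcons.
- by rewrite size_rcons Hsz.
move=> i Hi; rewrite -rcons_cons nth_rcons /= Hsz.
case: (ltnP i l.+1) => H1; first exact: Hlev.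
have Ei : i = l.+1 by lia.
by rewrite Ei eqxx.
Qed.

Arguments levels_path [T e P v].

Lemma walk_parity (T : finType) (e : rel T) (f : T -> bool) :
  (forall x y, e x y -> f x != f y) ->
  forall p u, path e u p -> f (last u p) = f u (+) odd (size p).
Proof.
move=> Hf; elim=> [|y p IH] u /=; first by rewrite addbF.
move=> /andP [Hu Hp]; rewrite IH //.
move: (Hf _ _ Hu); by case: (f u); case: (f y); case: (odd _).
Qed.

Arguments walk_parity [T e f].

Theorem proposition7 (T : finType) (e : rel T) (s k : nat) (v : T) (m : nat)
    (Ps : 'I_k -> seq {set T}) :
  simple_graph e -> connected e -> girth e s -> 2 <= k ->
  (forall a, level_partition e (Ps a)) ->
  (forall a, rooted_in (Ps a) v) ->
  level_disjoint Ps ->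
  is_ecc e v m ->
  (~ bipartite e -> max_height Ps = m + k - 1 -> s - 2 <= m) /\
  (bipartite e -> max_height Ps = m + 2 * k - 2 -> s - 3 <= m).
Proof.
move=> [Hsym Hirr] Hconn [[c0 Hc0] Hgirth] Hk Hlp Hroot Hld _.
have [w Hvw] : exists w, e v w.
  have [u Hu] : exists u, u != v.
    case: Hc0 => _ Huniq Hsz H3.
    case: (boolP (has (predC1 v) c0)); first by move/hasP=> [u _ Hu]; exists u.
    move=> Hn; exfalso.
    have Hsub : {subset c0 <= [:: v]}.
      move=> x Hx; rewrite inE; apply/negPn/negP => Hxv; apply: (negP Hn).
      by apply/hasP; exists x.
    have := uniq_leq_size Huniq Hsub; rewrite /=; lia.
  have /connectP [p Hp Hlast] := Hconn v u.
  case: p Hp Hlast => [|w p] /=; first by move=> _ Huv; rewrite Huv eqxx in Hu.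
  by move=> /andP [Hvw _] _; exists w.
pose L a := find (fun S : {set T} => w \in S) (Ps a).
have HL a : L a < size (Ps a) /\ w \in nth set0 (Ps a) (L a).
  have [_ _ Hcov _] := Hlp a. have [i Hi Hwi] := Hcov w.
  have Hhas : has (fun S : {set T} => w \in S) (Ps a).
    by apply/hasP; exists (nth set0 (Ps a) i); [exact: mem_nth|].
  by split; [rewrite -has_find | exact: (nth_find set0 Hhas)].
have HL0 a : 0 < L a.
  rewrite lt0n; apply/negP => /eqP H0. have [_ Hw] := HL a.
  have Hr := Hroot a; rewrite /rooted_in in Hr.
  rewrite H0 Hr in_set1 in Hw. move/eqP: Hw => Hw; by rewrite Hw Hirr in Hvw.
have Hmax a : L a <= max_height Ps.
  rewrite /max_height; apply: leq_trans (@leq_bigmax _ (fun b => height (Ps b)) a); rewrite /height.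
  have := (HL a).1; lia.
have Hinj : injective L.
  move=> a b Hab; apply/eqP; apply/negPn/negP => Hne.
  have := Hld a b Hne (L a).
  have Ha := (HL a).1; have Hb := (HL b).1; have := HL0 a.
  rewrite /height => H0 H; have {H} := H ltac:(apply/andP; split; lia).
  move/setP/(_ w); by rewrite inE (HL a).2 Hab (HL b).2 inE.
have Hcyc a : 2 <= L a -> s <= (L a).+1.
  have [Hl Hw] := HL a.
  have [p [Hp Hlast Hsz Hlev]] := levels_path (Hlp a) (Hroot a) (L a) w Hl Hw.
  have [_ Hdisj _ _] := Hlp a.
  move=> H2; apply: (Hgirth (v :: p)); split.
  - by rewrite /= rcons_path Hp Hlast Hsym Hvw.
  - apply/(uniqP v) => i j; rewrite !inE /= => Hi Hj Hij.
    apply/eqP; apply/negPn/negP => Hne.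
    have := Hdisj i j ltac:(lia) ltac:(lia) Hne.
    move=> Hd; have := disjointFr Hd (Hlev i ltac:(lia)).
    by rewrite Hij (Hlev j ltac:(lia)).
  - by rewrite /= Hsz.
  - lia.
split.
  move=> _ Hh.
  have := @count_bound _ L (1 :: iota (s-1) (max_height Ps + 2 - s)) Hinj.
  rewrite /= size_iota => H; have {H} := H ltac:(move=> a; rewrite inE mem_iota;
    case: (ltnP (L a) 2) => H2; apply/orP;
    [left; apply/eqP; have := HL0 a; lia
    | right; have := Hcyc a H2; have := Hmax a; lia]).
  lia.
move=> [f Hf] Hh.
have Hodd a : odd (L a).
  have [Hl Hw] := HL a.
  have [p [Hp Hlast Hsz _]] := levels_path (Hlp a) (Hroot a) (L a) w Hl Hw.
  have := walk_parity Hf p v Hp; rewrite Hlast Hsz => Hpar.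
  have := Hf _ _ Hvw; rewrite Hpar; by case: (f v); case: (odd (L a)).
pose L' a := (L a)./2.
have Hinj' : injective L'.
  move=> a b /= H; apply: Hinj.
  have := odd_double_half (L a); have := odd_double_half (L b).
  rewrite /L' in H; rewrite !Hodd H => Eb Ea; by rewrite -Ea Eb.
have := @count_bound _ L' (0 :: iota ((s-1)./2) ((max_height Ps - 1)./2 + 1 - (s-1)./2)) Hinj'.
rewrite /= size_iota => H; have {H} := H ltac:(move=> a; rewrite inE mem_iota /L';
    have E := odd_double_half (L a); rewrite Hodd in E;
    case: (ltnP (L a) 2) => H2; apply/orP;
    [left; apply/eqP; have := HL0 a; rewrite -!divn2 -!mul2n in E *; lia
    | right; have := Hcyc a H2; have := Hmax a; rewrite -!divn2 -!mul2n in E *; lia]).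
rewrite -!divn2; lia.
Qed.
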